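(* Let $(G,t)$ be an infinite biosphere and let $S_1,S_2\subseteq G$ be infinite specieslike clusters. If $\mathrm{gen}(S_1)\cap\mathrm{gen}(S_2)$ is infinite, then $S_1\sim S_2$, i.e., the symmetric difference $\mathrm{gen}(S_1)\triangle\mathrm{gen}(S_2)$ is finite.
   Context: An infinite biosphere is a directed graph $G$ together with a function $t$ assigning a real number $t(v)$ (the birthdate) to each vertex $v$ of $G$, such that: (1) whenever there is an edge from $v$ to $w$ ($v$ is a parent of $w$, $w$ a child of $v$), $t(v)<t(w)$; (2) for every $r\in\mathbb R$, at most finitely many vertices $v$ have $t(v)<r$; (3) every vertex has at most finitely many children; (4) $G$ has infinitely many vertices. Subsets of $G$ are sets of vertices with the induced edges. $v$ is an ancestor of $w$ (and $w$ a descendant of $v$) if there is a sequence $v=v_1,\dots,v_n=w$ with $n>1$ such that each $v_i$ is a parent of $v_{i+1}$. A set $S\subseteq G$ satisfies the identical ancestor point axiom if there is no $v\in S$ such that $S$ contains both infinitely many descendants of $v$ and infinitely many non-descendants of $v$. $S$ satisfies the convexity axiom if for every $v\in G$, if $v$ has an ancestor in $S$ and a descendant in $S$, then $v\in S$. A specieslike cluster is a subset $S\subseteq G$ that is connected (as an undirected graph, with the induced edges), satisfies the identical ancestor point axiom, and satisfies the convexity axiom. A vertex $v\in S$ is a generator of $S$ if $S$ contains at most finitely many non-descendants of $v$; $\mathrm{gen}(S)$ is the set of generators of $S$. For infinite $S_1,S_2\subseteq G$, $S_1\sim S_2$ means $\mathrm{gen}(S_1)\triangle\mathrm{gen}(S_2)$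 is finite. *)

(* Defs.v *)
From Stdlib Require Import Reals List Relations.
Open Scope R_scope.

Section Bio.
Variable V : Type.

Definition finite_set (P : V -> Prop) : Prop :=
  exists l : list V, forall v, P v -> In v l.
Definition infinite_set (P : V -> Prop) : Prop := ~ finite_set P.

(* An infinite biosphere: directed graph (edge relation E) with birthdates t. *)
Definition biosphere (E : V -> V -> Prop) (t : V -> R) : Prop :=
  (forall v w, E v w -> t v < t w) /\
  (forall r : R, finite_set (fun v => t v < r)) /\
  (forall v, finite_set (fun w => E v w)) /\
  infinite_set (fun _ => True).

Definition descendant (E : V -> V -> Prop) (v w : V) : Prop :=
  clos_trans V E v w.

Definition connected_set (E : V -> V -> Prop) (S : V -> Prop) : Prop :=
  forall x y, S x -> S y ->
    clos_refl_trans V (fun a b => S a /\ S b /\ (E a b \/ E b a)) x y.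

Definition identical_ancestor_point_axiom (E : V -> V -> Prop) (S : V -> Prop) : Prop :=
  ~ (exists v, S v /\
        infinite_set (fun w => S w /\ descendant E v w) /\
        infinite_set (fun w => S w /\ ~ descendant E v w)).

Definition convexity_axiom (E : V -> V -> Prop) (S : V -> Prop) : Prop :=
  forall v, (exists a, S a /\ descendant E a v) ->
            (exists d, S d /\ descendant E v d) -> S v.

Definition specieslike_cluster (E : V -> V -> Prop) (S : V -> Prop) : Prop :=
  connected_set E S /\ identical_ancestor_point_axiom E S /\ convexity_axiom E S.

Definition gen (E : V -> V -> Prop) (S : V -> Prop) (v : V) : Prop :=
  S v /\ finite_set (fun w => S w /\ ~ descendant E v w).

Definition sim (E : V -> V -> Prop) (S1 S2 : V -> Prop) : Prop :=
  finite_set (fun v => (gen E S1 v /\ ~ gen E S2 v) \/ (gen E S2 v /\ ~ gen E S1 v)).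

End Bio.

(* Main.v *)
Require Import Defs.
From Stdlib Require Import Reals List Relations Classical.
Open Scope R_scope.

Lemma fin_sub (V : Type) (P Q : V -> Prop) :
  finite_set V Q -> (forall x, P x -> Q x) -> finite_set V P.
Proof. intros [l Hl] H. exists l. auto. Qed.

Lemma fin_union (V : Type) (P Q : V -> Prop) :
  finite_set V P -> finite_set V Q -> finite_set V (fun x => P x \/ Q x).
Proof.
  intros [l1 H1] [l2 H2]. exists (l1 ++ l2). intros v [h|h];
  apply in_or_app; auto.
Qed.

Lemma inf_avoid (V : Type) (P Q : V -> Prop) :
  infinite_set V P -> finite_set V Q -> exists x, P x /\ ~ Q x.
Proof.
  intros HP HQ. apply NNPP. intro Hn. apply HP. apply (fin_sub _ _ _ HQ).
  intros x Px. apply NNPP. intro nq. apply Hn. eauto.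
Qed.

Lemma half (V : Type) (E : V -> V -> Prop) (S1 S2 : V -> Prop)
  (HS2 : convexity_axiom V E S2)
  (Hgen : infinite_set V (fun v => gen V E S1 v /\ gen V E S2 v)) :
  finite_set V (fun v => gen V E S1 v /\ ~ gen V E S2 v).
Proof.
  assert (exists g, gen V E S1 g /\ gen V E S2 g) as [g [Hg1 Hg2]].
  { destruct (inf_avoid V _ (fun _ => False) Hgen) as [x [Hx _]].
    - exists nil. intros v []. - eauto. }
  apply (fin_sub _ _ _ (proj2 Hg1)).
  intros v [Hv1 Hv2]. split; [exact (proj1 Hv1)|]. intro Hd.
  apply Hv2.
  destruct (inf_avoid V _ _ Hgen (proj2 Hv1)) as [c [[Hc1 Hc2] Hc]].
  assert (Hvc : descendant V E v c).
  { apply NNPP. intro n. apply Hc. split; [exact (proj1 Hc1)| exact n]. }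
  split.
  - apply HS2. exists g; split; [exact (proj1 Hg2)| exact Hd].
    exists c; split; [exact (proj1 Hc2)| exact Hvc].
  - apply (fin_sub _ _ _ (proj2 Hc2)). intros w [Hw Hn]. split; [exact Hw|].
    intro Hcw. apply Hn. eapply t_trans; eauto.
Qed.

Theorem mainTheorem2 (V : Type) (E : V -> V -> Prop) (t : V -> R)
  (HG : biosphere V E t) (S1 S2 : V -> Prop)
  (HS1inf : infinite_set V S1) (HS2inf : infinite_set V S2)
  (HS1 : specieslike_cluster V E S1) (HS2 : specieslike_cluster V E S2)
  (Hgen : infinite_set V (fun v => gen V E S1 v /\ gen V E S2 v)) :
  sim V E S1 S2.
Proof.
  unfold sim. apply fin_union.
  - apply half. exact (proj2 (proj2 HS2)). exact Hgen.
  - apply half. exact (proj2 (proj2 HS1)).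
    intro F. apply Hgen. apply (fin_sub _ _ _ F). intros x [a b]; auto.
Qed.
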